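(* Let $B$ be a board and $S$ a set of sinks such that every region of $B$ contains a sink, and let $T$ be a minimum-weight arborescence (converging to the root $r$) of the extended large tilt graph $\hat G_L(B,S)$. If $T$ contains two distinct inverse edges $(p_1,q)$ and $(p_2,q)$ with common head $q$, then $q$ is a sink.
   Context: Pixels are unit squares indexed by $\mathbb{Z}^2$. A board $B=(V,E)$ is a finite subgraph of the square grid graph on $\mathbb{Z}^2$; regions are its connected components; its boundary consists of pixel sides not shared with a neighbouring pixel joined by an edge of $E$. $S\subseteq V$ are sinks. For a pixel $p$, its row (column) segment is the maximal set of pixels reachable from $p$ using only horizontal (vertical) edges of $E$; $p^\ell,p^r$ are the leftmost/rightmost pixels of its row segment and $p^u,p^d$ the topmost/bottommost pixels of its column segment. The full tilt graph $G_F(B)$ has vertex set $V$ and edges $(p,p^x)$ for $x\in\{\ell,r,u,d\}$, $p^x\ne p$. A corner pixel is a pixel $p$ with $p=p^x=p^y$ for some $x\in\{\ell,r\}$, $y\in\{u,d\}$. The large tilt graph $G_L(B,S)$ is the subgraph of $G_F(B)$ induced by the vertex set consisting of (i) all pixels reachable in $G_F(B)$ from corner pixels, (ii) every sink $s$ and $s^\ell,s^r,s^u,s^d$, (iii) for every reflex corner of the boundary, the endpoints of the row and column segments of the pixels incident to that corner, (iv) all pixels on the intersection of a row segment and a column segment each containing a pixel included in (i)–(iii). Extended graph: for a directed graph $G$ with sinks $S$, $\hat G$ has vertex set $V(G)\cup\{r\}$ with new root $r$ and edges: every edge of $G$ with weight $0$; for every edge $(p,q)$ of $G$ such that $(q,p)$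 is not an edge of $G$, the inverse edge $(q,p)$ with weight $1$; and $(s,r)$ with weight $0$ for each $s\in S$. An arborescence converging to $r$ is a spanning subgraph in which every vertex other than $r$ has exactly one outgoing edge and a directed path to $r$; its weight is the sum of its edge weights. *)

(* Defs.v *)
From mathcomp Require Import all_boot all_order all_algebra.
Set Implicit Arguments. Unset Strict Implicit. Unset Printing Implicit Defensive.
Import Order.TTheory GRing.Theory Num.Theory.

(* A board: the pixel set is a finite type [T] embedded injectively in Z^2 by
   [pos] (pixel at (x,y) is the unit square [x,x+1]x[y,y+1]; y grows upward),
   and [E : rel T] is the (symmetric) edge relation, whose edges join
   grid-adjacent pixels. *)

Section Tilt.
Local Open Scope ring_scope.

Variable T : finType.
Variable pos : T -> int * int.
Variable E : rel T.

Definition xc (p : T) : int := (pos p).1.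
Definition yc (p : T) : int := (pos p).2.

Definition grid_adj (a b : int * int) : bool :=
  ((a.1 == b.1) && ((a.2 - b.2 == 1) || (b.2 - a.2 == 1))) ||
  ((a.2 == b.2) && ((a.1 - b.1 == 1) || (b.1 - a.1 == 1))).

Definition is_board : Prop :=
  injective pos /\ symmetric E /\ (forall p q, E p q -> grid_adj (pos p) (pos q)).

Definition hE : rel T := fun p q => E p q && (yc p == yc q).
Definition vE : rel T := fun p q => E p q && (xc p == xc q).

Definition rowseg (p : T) : {set T} := [set q | connect hE p q].
Definition colseg (p : T) : {set T} := [set q | connect vE p q].

Definition isL (p q : T) : bool :=
  (q \in rowseg p) && [forall q' in rowseg p, xc q <= xc q'].
Definition isR (p q : T) : bool :=
  (q \in rowseg p) && [forall q' in rowseg p, xc q' <= xc q].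
Definition isU (p q : T) : bool :=
  (q \in colseg p) && [forall q' in colseg p, yc q' <= yc q].
Definition isD (p q : T) : bool :=
  (q \in colseg p) && [forall q' in colseg p, yc q <= yc q'].

Definition tiltTo (p q : T) : bool := [|| isL p q, isR p q, isU p q | isD p q].

Definition GF : rel T := fun p q => (p != q) && tiltTo p q.

Definition corner_pixel (p : T) : bool := (isL p p || isR p p) && (isU p p || isD p p).

Definition openc (c1 c2 : int * int) : bool :=
  [exists p, exists q, [&& pos p == c1, pos q == c2 & E p q]].

(* Its four incident cells are
   Q0=(a,b), Q1=(a-1,b), Q2=(a-1,b-1), Q3=(a,b-1) (cyclic order); the unit
   side between consecutive cells Qi, Qi+1 is not a boundary side iff hi.
   v is a reflex corner iff some boundary side meets v and some three
   consecutive cells around v are joined through non-boundary sides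
   (i.e. the boundary at v encloses an angle of at least 270 degrees). *)
Definition reflex_corner (v : int * int) : bool :=
  let a := v.1 in let b := v.2 in
  let Q0 := (a, b) in let Q1 := (a - 1, b) in
  let Q2 := (a - 1, b - 1) in let Q3 := (a, b - 1) in
  let h0 := openc Q0 Q1 in let h1 := openc Q1 Q2 in
  let h2 := openc Q2 Q3 in let h3 := openc Q3 Q0 in
  ~~ [&& h0, h1, h2 & h3] && [|| h0 && h1, h1 && h2, h2 && h3 | h3 && h0].

Definition cornersOf (c : int * int) : seq (int * int) :=
  [:: c; (c.1 + 1, c.2); (c.1, c.2 + 1); (c.1 + 1, c.2 + 1)].

Variable S : {set T}.

Definition W0 : {set T} :=
  [set p | [|| [exists c, corner_pixel c && connect GF c p],
              (p \in S) || [exists s in S, tiltTo s p]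
            | [exists u, has reflex_corner (cornersOf (pos u)) && tiltTo u p]]].

Definition WL : {set T} :=
  W0 :|: [set p | [exists a in W0, exists b in W0,
                     (p \in rowseg a) && (p \in colseg b)]].

Definition GL : rel T := fun p q => [&& p \in WL, q \in WL & GF p q].

Definition invE (a c : T) : bool := GL c a && ~~ GL a c.

(* edges of the extended graph hat G_L; the root r is [None] *)
Definition hatE (a : T) (b : option T) : bool :=
  (a \in WL) && (if b is Some c then GL a c || invE a c else a \in S).

Definition hatw (a : T) (b : option T) : nat :=
  if b is Some c then (if GL a c then 0%N else 1%N) else 0%N.

(* a spanning subgraph in which every non-root vertex has exactly one outgoing
   edge is given by its successor function f (only values on WL matter) *)
Definition treeRel (f : T -> option T) : rel (option T) :=
  fun a b => if a is Some x then (x \in WL) && (b == f x) else false.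

Definition is_arborescence (f : T -> option T) : bool :=
  [forall v in WL, hatE v (f v)] &&
  [forall v in WL, connect (treeRel f) (Some v) None].

Definition arb_weight (f : T -> option T) : nat := (\sum_(v in WL) hatw v (f v))%N.

End Tilt.

(* Main.v *)
Require Import Defs.
From mathcomp Require Import all_boot all_order all_algebra.
Set Implicit Arguments. Unset Strict Implicit. Unset Printing Implicit Defensive.

Section Aux.
Variable T : finType.
Variable pos : T -> int * int.
Variable E : rel T.
Variable S : {set T}.
Hypothesis symE : symmetric E.

Lemma hE_sym : symmetric (hE pos E).
Proof. by move=> a b; rewrite /hE symE eq_sym. Qed.
Lemma vE_sym : symmetric (vE pos E).
Proof. by move=> a b; rewrite /vE symE eq_sym. Qed.

Lemma rowseg_eq p q : q \in rowseg pos E p -> rowseg pos E p = rowseg pos E q.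
Proof.
rewrite inE => pq; apply/setP => z; rewrite !inE; apply/idP/idP => H.
  by apply: connect_trans H; rewrite (sym_connect_sym hE_sym).
by apply: connect_trans H.
Qed.
Lemma colseg_eq p q : q \in colseg pos E p -> colseg pos E p = colseg pos E q.
Proof.
rewrite inE => pq; apply/setP => z; rewrite !inE; apply/idP/idP => H.
  by apply: connect_trans H; rewrite (sym_connect_sym vE_sym).
by apply: connect_trans H.
Qed.

Lemma rowseg_sym p q : (q \in rowseg pos E p) = (p \in rowseg pos E q).
Proof. by rewrite !inE (sym_connect_sym hE_sym). Qed.
Lemma colseg_sym p q : (q \in colseg pos E p) = (p \in colseg pos E q).
Proof. by rewrite !inE (sym_connect_sym vE_sym). Qed.

Lemma rowseg_self p : p \in rowseg pos E p.
Proof. by rewrite inE connect0. Qed.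
Lemma colseg_self p : p \in colseg pos E p.
Proof. by rewrite inE connect0. Qed.

Definition hx q := isL pos E q q || isR pos E q q.
Definition vx q := isU pos E q q || isD pos E q q.

Lemma tilt_char p q : tiltTo pos E p q =
  ((q \in rowseg pos E p) && hx q) || ((q \in colseg pos E p) && vx q).
Proof.
rewrite /tiltTo /hx /vx /isL /isR /isU /isD.
case Hr: (q \in rowseg pos E p); case Hc: (q \in colseg pos E p) => /=;
  rewrite ?(rowseg_eq Hr) ?(colseg_eq Hc) ?rowseg_self ?colseg_self /=.
all: by rewrite ?orbF ?orbA.
Qed.

Notation tR := (treeRel pos E S).

Lemma tR_det f a b b' : tR f a b -> tR f a b' -> b = b'.
Proof. by case: a => // a /andP[_ /eqP ->] /andP[_ /eqP ->]. Qed.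

Lemma tR_None f b : tR f None b = false.
Proof. by []. Qed.

Lemma conn_step f a b y : tR f a y -> connect (tR f) a b -> a != b -> connect (tR f) y b.
Proof.
move=> ay /connectP[[|z s] /= Hp Hl]; first by rewrite Hl eqxx.
move=> _; case/andP: Hp => az Hp.
rewrite (tR_det ay az); apply/connectP; by exists s.
Qed.

Lemma conn_None f b : connect (tR f) None b -> b = None.
Proof. by case/connectP => [[|z s]] //= _ ->. Qed.

Lemma no_cycle f x y : tR f x y -> connect (tR f) y x -> connect (tR f) x None -> False.
Proof.
move=> xy yx xN.
have H : forall s w, path (tR f) w s -> connect (tR f) w x -> connect (tR f) (last w s) x.
  elim=> [|z s IH] w //= /andP[wz Hp] wx; apply: IH => //.
  case: (eqVneq w x) => [ewx|nwx].
    by subst w; rewrite (tR_det wz xy).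
  exact: conn_step wz wx nwx.
case/connectP: xN => s Hp Hl.
have := H s x Hp (connect0 _ _); rewrite -Hl => /conn_None.
by case: x xy {yx Hp Hl H}.
Qed.

Lemma conn_modif f g p x z : (forall y, y != p -> g y = f y) ->
  connect (tR f) x z -> connect (tR g) x z \/ connect (tR g) x (Some p).
Proof.
move=> gf /connectP[s Hp ->] {z}.
elim: s x Hp => [|y s IH] x /=; first by left.
case/andP=> xy /IH [H|H].
  case: x xy => [x0|] // xy.
  case: (eqVneq x0 p) => [->|nx]; first by right.
  left; apply: connect_trans H; apply: connect1.
  by move: xy; rewrite /treeRel gf.
case: x xy => [x0|] // xy.
case: (eqVneq x0 p) => [->|nx]; first by right.
right; apply: connect_trans H; apply: connect1.
by move: xy; rewrite /treeRel gf.
Qed.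

End Aux.

Section Main.
Variable T : finType.
Variable pos : T -> int * int.
Variable E : rel T.
Variable S : {set T}.
Hypothesis symE : symmetric E.
Variable f : T -> option T.
Hypothesis arb : is_arborescence pos E S f.
Hypothesis minf : forall g : T -> option T, is_arborescence pos E S g ->
     (arb_weight pos E S f <= arb_weight pos E S g)%N.

Notation WL := (WL pos E S).
Notation GL := (GL pos E S).
Notation tR := (treeRel pos E S).

Lemma arb_hat v : v \in WL -> hatE pos E S v (f v).
Proof. by case/andP: arb => /forallP H _ vW; exact: (implyP (H v) vW). Qed.
Lemma arb_conn v : v \in WL -> connect (tR f) (Some v) None.
Proof. by case/andP: arb => _ /forallP H vW; exact: (implyP (H v) vW). Qed.

Lemma exch p q c : p \in WL -> f p = Some q -> ~~ GL p q -> GL p c ->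
  ~ connect (tR f) (Some c) (Some p) -> False.
Proof.
move=> pW fp nG Gc ncp.
pose g := fun x => if x == p then Some c else f x.
have gf : forall y, y != p -> g y = f y by move=> y yp; rewrite /g (negbTE yp).
have fg : forall y, y != p -> f y = g y by move=> y yp; rewrite gf.
have cW : c \in WL by case/and3P: Gc.
have Harb : is_arborescence pos E S g.
  apply/andP; split; apply/forallP => v; apply/implyP => vW.
    rewrite /g; case: eqP => [->|_]; last exact: arb_hat.
    by rewrite /hatE pW Gc.
  case: (conn_modif gf (arb_conn vW)) => [//|vp].
  apply: connect_trans vp _.
  have pc : connect (tR g) (Some p) (Some c).
    by apply: connect1; rewrite /treeRel pW /g /= (eqxx p).
  apply: connect_trans pc _.
  case: (conn_modif gf (arb_conn cW)) => [//|cp].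
  by case: (conn_modif fg cp) => /ncp.
have := minf Harb; rewrite /arb_weight (bigD1 p pW) [X in (_ <= X)%N](bigD1 p pW) /=.
rewrite /g eqxx fp /hatw (negbTE nG) Gc.
have -> : (\sum_(v | (v \in WL) && (v != p))
            (if (if v == p then Some c else f v) is Some c0 then (if GL v c0 then 0 else 1) else 0))%N
        = (\sum_(v | (v \in WL) && (v != p))
            (if f v is Some c0 then (if GL v c0 then 0 else 1) else 0))%N.
  by apply: eq_bigr => v /andP[_ vp]; rewrite (negbTE vp).
by rewrite add1n add0n ltnn.
Qed.


Lemma cyc p q : p \in WL -> f p = Some q -> ~ connect (tR f) (Some q) (Some p).
Proof.
move=> pW fp H.
have e : tR f (Some p) (Some q) by rewrite /treeRel pW fp /=.
exact: (no_cycle e H (arb_conn pW)).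
Qed.

Lemma inv_facts p q : p \in WL -> invE pos E S p q ->
  [/\ q \in WL, p != q, tiltTo pos E q p & ~~ tiltTo pos E p q].
Proof.
move=> pW /andP[Gqp nGpq].
case/and3P: Gqp => qW _ /andP[nqp tqp].
split => //; first by rewrite eq_sym.
apply: contra nGpq => t; by rewrite /GL /GF pW qW t eq_sym nqp.
Qed.

Lemma mixed p1 p2 q : p1 \in WL -> p2 \in WL -> f p1 = Some q -> f p2 = Some q ->
  invE pos E S p1 q -> invE pos E S p2 q ->
  p1 \in rowseg pos E q -> p2 \in colseg pos E q -> q \in S.
Proof.
move=> p1W p2W f1 f2 i1 i2 r1 c2.
case: (inv_facts p1W i1) => qW n1 t1 nt1.
case: (inv_facts p2W i2) => _ n2 t2 nt2.
have nh : ~~ hx pos E q.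
  apply: contra nt1 => h; by rewrite tilt_char // rowseg_sym // r1 h.
have nv : ~~ vx pos E q.
  apply: contra nt2 => h; by rewrite tilt_char // colseg_sym // c2 h orbT.
have := arb_hat qW; rewrite /hatE qW /=.
case Hfq: (f q) => [c|] //.
case/orP => [Gqc | /andP[Gcq _]]; last first.
  case/and3P: Gcq => _ _ /andP[_]; rewrite tilt_char //.
  by case/orP => /andP[_ H]; [move: nh | move: nv]; rewrite H.
case/and3P: Gqc => _ cW /andP[nqc]; rewrite tilt_char // => /orP[] /andP[rc hc].
  case: (eqVneq c p1) => [ecp|ncp].
    subst c; case: (cyc p1W f1); apply: connect1; by rewrite /treeRel qW Hfq /= eqxx.
  have nG : ~~ GL p1 q by case/andP: i1.
  have Gc : GL p1 c.
    by rewrite /GL p1W cW /GF eq_sym ncp tilt_char // -(rowseg_eq symE r1) rc hc.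
  exfalso; apply: (exch p1W f1 nG Gc) => H; apply: (cyc p1W f1); apply: connect_trans H.
  by apply: connect1; rewrite /treeRel qW Hfq /= eqxx.
case: (eqVneq c p2) => [ecp|ncp].
  by subst c; case: (cyc p2W f2); apply: connect1; rewrite /treeRel qW Hfq /= eqxx.
have nG : ~~ GL p2 q by case/andP: i2.
have Gc : GL p2 c.
  by rewrite /GL p2W cW /GF eq_sym ncp tilt_char // -(colseg_eq symE c2) rc hc orbT.
exfalso; apply: (exch p2W f2 nG Gc) => H; apply: (cyc p2W f2); apply: connect_trans H.
by apply: connect1; rewrite /treeRel qW Hfq /= eqxx.
Qed.

End Main.

Theorem mainTheorem7 (T : finType) (pos : T -> int * int) (E : rel T) (S : {set T}) :
  is_board pos E ->
  (forall p : T, exists2 s, s \in S & connect E p s) ->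
  forall f : T -> option T,
  is_arborescence pos E S f ->
  (forall g : T -> option T, is_arborescence pos E S g ->
     (arb_weight pos E S f <= arb_weight pos E S g)%N) ->
  forall p1 p2 q : T, p1 != p2 ->
  p1 \in WL pos E S -> p2 \in WL pos E S ->
  f p1 = Some q -> f p2 = Some q ->
  invE pos E S p1 q -> invE pos E S p2 q ->
  q \in S.
Proof.
move=> [_ [symE _]] _ f arb minf p1 p2 q n12 p1W p2W f1 f2 i1 i2.
case: (inv_facts p1W i1) => qW _ t1 _.
case: (inv_facts p2W i2) => _ _ t2 _.
have nG1 : ~~ GL pos E S p1 q by case/andP: i1.
have same : forall c, GL pos E S p1 c -> f c = Some q -> c != p1 -> False.
  move=> c Gc fc ncp; apply: (exch arb minf p1W f1 nG1 Gc) => H.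
  apply: (cyc arb p1W f1); apply: conn_step H ncp.
  case/and3P: Gc => _ cW _; by rewrite /treeRel cW fc /= eqxx.
rewrite tilt_char // in t1; rewrite tilt_char // in t2.
case/orP: t1 => /andP[r1 h1]; case/orP: t2 => /andP[r2 h2].
- case: (same p2 _ f2 _) => //; last by rewrite eq_sym.
  by rewrite /GL p1W p2W /GF n12 tilt_char // -(rowseg_eq symE r1) r2 h2.
- exact: (mixed symE arb minf p1W p2W f1 f2 i1 i2 r1 r2).
- exact: (mixed symE arb minf p2W p1W f2 f1 i2 i1 r2 r1).
- case: (same p2 _ f2 _) => //; last by rewrite eq_sym.
  by rewrite /GL p1W p2W /GF n12 tilt_char // -(colseg_eq symE r1) r2 h2 orbT.
Qed.
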